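(* Let $n \ge m \ge 2$ be integers and let $K_{n,m}$ be the complete bipartite graph with parts of sizes $n$ and $m$. (i) If $n$ is even, then $\mathrm{sg_e}(K_{n,m}) = n+1$ if $n=m$, and $\mathrm{sg_e}(K_{n,m}) = n$ if $n \ge m+1$. (ii) If $n$ is odd, then $\mathrm{sg_e}(K_{n,m}) = n+2$ if $n=m$, $\mathrm{sg_e}(K_{n,m}) = n+1$ if $n=m+1$, and $\mathrm{sg_e}(K_{n,m}) = n$ if $n \ge m+2$.
   Context: All graphs are finite, simple and connected. A set $S \subseteq V(G)$ is a strong edge geodetic set of $G$ if one can assign to every unordered pair $\{u,v\}$ of distinct vertices of $S$ either one shortest $u,v$-path $P_{uv}$ in $G$ or no path, in such a way that every edge of $G$ lies on at least one of the assigned paths. The strong edge geodetic number $\mathrm{sg_e}(G)$ is the minimum cardinality of a strong edge geodetic set of $G$. *)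

(* Defs.v *)
From mathcomp Require Import all_boot.
Set Implicit Arguments. Unset Strict Implicit. Unset Printing Implicit Defensive.

(* A simple graph: vertex type T (finType), adjacency e : rel T,
   assumed symmetric and irreflexive. A u,v-walk is represented by its vertex
   sequence x :: q with path e x q. *)

Definition shortest_path (T : finType) (e : rel T) (u v : T) (s : seq T) : Prop :=
  exists x q, s = x :: q /\ path e x q /\ [set x; last x q] = [set u; v] /\
    (forall r, path e x r -> last x r = last x q -> size q <= size r).

Definition edge_on (T : finType) (s : seq T) (a b : T) : bool :=
  has (fun xy => ((xy.1 == a) && (xy.2 == b)) || ((xy.1 == b) && (xy.2 == a)))
      (zip s (behead s)).

(* S is a strong edge geodetic set: to each unordered pair {u,v} of distinct
   vertices of S one assigns (via P applied to the 2-set [set u; v]) either one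
   shortest u,v-path or none, such that every edge lies on an assigned path. *)
Definition strong_edge_geodetic (T : finType) (e : rel T) (S : {set T}) : Prop :=
  exists P : {set T} -> option (seq T),
    (forall u v, u \in S -> v \in S -> u != v ->
       match P [set u; v] with
       | None => True
       | Some s => shortest_path e u v s
       end) /\
    (forall a b, e a b ->
       exists u v s, [/\ u \in S, v \in S, u != v,
                        P [set u; v] = Some s & edge_on s a b]).

Definition is_sge (T : finType) (e : rel T) (k : nat) : Prop :=
  (exists S : {set T}, strong_edge_geodetic e S /\ #|S| = k) /\
  (forall S : {set T}, strong_edge_geodetic e S -> k <= #|S|).

Definition Knm (n m : nat) : rel 'I_(n + m) :=
  fun i j => (i < n) != (j < n).
Arguments Knm : clear implicits.

(* Main.v *)
Require Import Defs.
From mathcomp Require Import all_boot zify.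
Set Implicit Arguments. Unset Strict Implicit. Unset Printing Implicit Defensive.

Section Bip.
Variables (T : finType) (p : pred T) (e : rel T).
Hypothesis he : forall x y, e x y = (p x != p y).

Lemma set2_eq1 (x u v : T) : [set x; x] = [set u; v] -> u = v.
Proof.
move=> h. have hu : u \in [set x; x] by rewrite h set21.
have hv : v \in [set x; x] by rewrite h set22.
by move: hu hv; rewrite !in_set2 !orbb => /eqP -> /eqP ->.
Qed.

Lemma sp_shape u v s : u != v -> (exists x, p x) -> (exists x, ~~ p x) ->
  shortest_path e u v s -> exists x q, [/\ s = x :: q, path e x q,
    [set x; last x q] = [set u; v], x != last x q & 0 < size q <= 2].
Proof.
move=> huv [x1 px1] [x2 px2] [x [q [-> [pq [hs hmin]]]]].
have hxl : x != last x q.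
  apply/negP => /eqP hx; move: hs; rewrite -hx => /set2_eq1 huv'.
  by rewrite huv' eqxx in huv.
exists x, q; split => //.
apply/andP; split.
  by case: q hxl {pq hs hmin} => //=; rewrite eqxx.
set y := last x q in hxl hmin *.
case hxy: (p x == p y).
  have [z hz] : exists z, p z != p x.
    case hpx: (p x); [exists x2 | exists x1]; by rewrite ?hpx ?px1 ?(negbTE px2).
  apply: (hmin [:: z; y]) => //=.
  rewrite !he andbT; apply/andP; split; first by rewrite eq_sym.
  by rewrite -(eqP hxy).
have := hmin [:: y] => /=; rewrite he hxy andbT => h.
by apply: leq_trans (h isT erefl) _.
Qed.

Lemma edge_on2 (x y a b : T) : edge_on [:: x; y] a b ->
  (x == a) && (y == b) || (x == b) && (y == a).
Proof. by rewrite /edge_on /= orbF. Qed.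

Lemma edge_on3 (x z y a b : T) : edge_on [:: x; z; y] a b ->
  [\/ (x == a) && (z == b), (x == b) && (z == a),
      (z == a) && (y == b) | (z == b) && (y == a)].
Proof.
rewrite /edge_on /= orbF.
by case/orP => [/orP [] | /orP []] h; [apply: Or41 | apply: Or42 | apply: Or43 | apply: Or44].
Qed.

Lemma in2S (S : {set T}) x y u v : [set x; y] = [set u; v] -> u \in S -> v \in S ->
  x \in S /\ y \in S.
Proof.
move=> h hu hv.
have : x \in [set u; v] by rewrite -h set21.
have : y \in [set u; v] by rewrite -h set22.
by rewrite !in_set2 => /orP [] /eqP -> /orP [] /eqP ->.
Qed.

Lemma edge_S S : strong_edge_geodetic e S -> forall a b, e a b -> a \in S \/ b \in S.
Proof.
move=> [P [hP hcov]] a b eab.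
have [u [v [s [hu hv huv hPs hon]]]] := hcov a b eab.
have := hP u v hu hv huv; rewrite hPs => hsp.
have ne1 : exists x, p x by case hpa: (p a); [exists a | exists b; move: eab; rewrite he hpa; case: (p b)].
have ne2 : exists x, ~~ p x by case hpa: (p a); [exists b; move: eab; rewrite he hpa; case: (p b) | exists a; rewrite hpa].
have [x [q [hs pq hset hxl /andP [q0 q2]]]] := sp_shape huv ne1 ne2 hsp.
have [xS lS] := in2S hset hu hv.
subst s; clear hsp hPs; case: q q0 q2 hon pq hset hxl xS lS => [|z [|y [|? ?]]] //= _ _.
  by move=> /edge_on2 /orP [] /andP [/eqP <- /eqP <-]; auto.
move=> /edge_on3 [] /andP [/eqP ha /eqP hb]; subst; auto.
Qed.

Lemma count_lb S (X Y : {set T}) : strong_edge_geodetic e S ->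
  (forall x, (x \in X) = p x) -> (forall x, (x \in Y) = ~~ p x) -> X \subset S ->
  #|Y :\: S| * (#|X| + odd #|X|) <= #|X| * (#|X|).-1.
Proof.
move=> [P [hP hcov]] hX hY XS.
set W := Y :\: S.
pose mid Q := match P Q with Some [:: _; z; _] => Some z | _ => None end.
pose D := [set Q : {set T} | (Q \subset X) && (#|Q| == 2)].
pose F w := [set Q | (Q \in D) && (mid Q == Some w)].
have stepA : forall w, w \in W -> forall a, a \in X -> exists2 Q, Q \in F w & a \in Q.
  move=> w; rewrite in_setD => /andP [wnS wY] a aX.
  have eaw : e a w by rewrite he -hX aX; move: wY; rewrite hY => /negbTE ->.
  have [u [v [s [hu hv huv hPs hon]]]] := hcov a w eaw.
  have := hP u v hu hv huv; rewrite hPs => hsp.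
  have ne1 : exists x, p x by exists a; rewrite -hX.
  have ne2 : exists x, ~~ p x by exists w; rewrite -hY.
  have [x [q [hs pq hset hxl /andP [q0 q2]]]] := sp_shape huv ne1 ne2 hsp.
  have [xS lS] := in2S hset hu hv.
  subst s; clear hsp.
  case: q q0 q2 hon pq hset hxl xS lS hPs => [|z [|y [|? ?]]] //= _ _.
    move=> /edge_on2 /orP [] /andP [/eqP h1 /eqP h2] _ _ _ h3 h4; subst;
      by rewrite ?h3 ?h4 in wnS.
  move=> hon pq hset hxl xS lS hPs.
  have [hzw haxy] : z = w /\ (a == x) || (a == y).
    case/edge_on3: hon => /andP [/eqP h1 /eqP h2].
    - by rewrite h2 h1 eqxx.
    - by move: xS; rewrite h1 (negbTE wnS).
    - by move: lS; rewrite /= h2 (negbTE wnS).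
    - by rewrite h1 h2 eqxx orbT.
  subst z.
  exists [set u; v]; last by rewrite -hset in_set2.
  rewrite inE /mid hPs eqxx andbT inE -hset cards2 hxl andbT.
  move: pq => /= /andP [exw /andP [ewy _]].
  have pw : ~~ p w by rewrite -hY.
  apply/subsetP => t; rewrite in_set2 => /orP [] /eqP ->; rewrite hX.
    by move: exw; rewrite he (negbTE pw); case: (p x).
  by move: ewy; rewrite he (negbTE pw); case: (p y).
have stepB : forall w, w \in W -> #|X| + odd #|X| <= 2 * #|F w|.
  move=> w wW.
  have cov : X \subset cover (F w).
    apply/subsetP => a aX; have [Q QF aQ] := stepA w wW a aX.
    by apply/bigcupP; exists Q.
  have h1 := (leq_card_cover (F w)).1.
  have h2 : \sum_(Q in F w) #|Q| = #|F w| * 2.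
    rewrite -sum_nat_const; apply: eq_bigr => Q.
    by rewrite inE => /andP []; rewrite inE => /andP [_ /eqP].
  have h3 := subset_leq_card cov.
  have h4 : #|X| <= 2 * #|F w| by rewrite mulnC -h2; apply: leq_trans h3 h1.
  have hh := odd_double_half #|X|; rewrite -muln2 in hh.
  move: hh; set hf := _./2; case: (odd #|X|) => /= hh; clearbody hf; move: h4 hh; move: #|X| #|F w| => x0 f0; lia.
have stepC : \sum_(w in W) #|F w| <= #|D|.
  case: (set_0Vmem W) => [-> | [w0 w0W]]; first by rewrite big_set0.
  pose mw Q := if mid Q is Some z then z \in W else false.
  have : #|[set Q | (Q \in D) && mw Q]| <= #|D|.
    by apply: subset_leq_card; apply/subsetP => Q; rewrite inE => /andP [].
  rewrite -sum1dep_card (partition_big (fun Q => odflt w0 (mid Q)) (fun w => w \in W)).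
    apply: leq_trans; apply: leq_sum => w wW; rewrite sum1dep_card.
    apply: subset_leq_card; apply/subsetP => Q; rewrite !inE => /andP [QD /eqP hm].
    by rewrite QD /mw hm /= wW eqxx.
  by move=> Q /andP [_]; rewrite /mw; case: (mid Q).
have h3 : #|W| * (#|X| + odd #|X|) <= 2 * \sum_(w in W) #|F w|.
  rewrite -sum_nat_const big_distrr /=; apply: leq_sum => w wW; exact: stepB.
have h4 : 2 * #|D| = #|X| * (#|X|).-1.
  by rewrite /D cards_draws -mul_bin_diag bin1.
rewrite -h4; apply: leq_trans h3 _; rewrite leq_mul2l stepC orbT //.
Qed.
End Bip.

Lemma card_lt N k : k <= N -> #|[set i : 'I_N | i < k]| = k.
Proof. by move=> kN; rewrite -sum1dep_card (big_ord_narrow kN) sum1_card card_ord. Qed.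

Definition NC n := if odd n then n.-2 else n.-1.
Definition rr (N i j : nat) := if j == N then (2 * i) %% N else (i + j) %% N.
Definition col n (a b : nat) :=
  if odd n && (maxn a b == n.-1) then minn a b %% NC n else rr (NC n) (minn a b) (maxn a b).

Lemma col_sym n a b : col n a b = col n b a.
Proof. by rewrite /col minnC maxnC. Qed.

Lemma rr_ex N a c : odd N -> a <= N -> c < N ->
  exists a', [/\ a' <= N, a' != a & rr N (minn a a') (maxn a a') = c].
Proof.
move=> oN aN cN.
have N0 : 0 < N by move: oN; clear; case: N.
case: (ltnP a N) => [aN' | aN''].
- case h2: ((2 * a) %% N == c).
  + exists N; split => //; first by apply/eqP; lia.
    rewrite (minn_idPl (ltnW aN')) (maxn_idPr (ltnW aN')) /rr eqxx; exact/eqP.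
  + set a' := (c + (N - a)) %% N.
    have a'N : a' < N by rewrite ltn_mod.
    have hs : (a + a') %% N = c.
      rewrite /a' modnDmr.
      have -> : a + (c + (N - a)) = c + N by lia.
      by rewrite modnDr modn_small.
    exists a'; split; first exact: ltnW.
    * apply/eqP => ha; move: h2; rewrite -hs ha addnn mul2n eqxx //.
    * have hmx : maxn a a' < N by rewrite gtn_max aN' a'N.
      by rewrite /rr (ltn_eqF hmx) addn_min_max.
- have aeq : a = N by apply/eqP; rewrite eqn_leq aN aN''.
  subst a; clear aN aN''.
  set h := N.+1./2.
  have h2 : 2 * h = N.+1.
    have := odd_double_half N.+1; rewrite /= oN /= -/h -muln2; lia.
  set a' := (c * h) %% N.
  have a'N : a' < N by rewrite ltn_mod.
  exists a'; split; first exact: ltnW.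
    by apply/eqP; lia.
  rewrite (minn_idPr (ltnW a'N)) (maxn_idPl (ltnW a'N)) /rr eqxx /a' modnMmr.
  have -> : 2 * (c * h) = c * N + c by nia.
  by rewrite modnMDl modn_small.
Qed.

Lemma col_ex n a c : 2 <= n -> (odd n -> 3 <= n) -> a < n -> c < NC n ->
  exists a', [/\ a' < n, a' != a & col n a a' = c].
Proof.
move=> hn ho an cN.
rewrite /col; case on: (odd n).
- have n3 := ho on.
  have hN : n = (NC n).+2 by rewrite /NC on; lia.
  have oN : odd (NC n) by move: on; rewrite {1}hN /= negbK.
  case: (eqVneq a n.-1) => ha.
  + exists c; split.
    * move: cN; rewrite /NC on; lia.
    * apply/eqP; move: cN; rewrite /NC on; lia.
    * have cl : c <= n.-1 by move: cN; rewrite /NC on; lia.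
      by rewrite ha (maxn_idPl cl) (minn_idPr cl) eqxx modn_small.
  + have aN : a <= NC n by rewrite /NC on; lia.
    have [a' [a'N a'a hr]] := rr_ex oN aN cN.
    exists a'; split => //; first by lia.
    have hm : maxn a a' != n.-1 by rewrite neq_ltn; apply/orP; left; rewrite gtn_max; apply/andP; split; lia.
    by rewrite (negbTE hm).
- have hN : n = (NC n).+1 by rewrite /NC on; lia.
  have oN : odd (NC n) by move: on; rewrite {1}hN /= => /negbFE.
  have aN : a <= NC n by rewrite /NC on; lia.
  have [a' [a'N a'a hr]] := rr_ex oN aN cN.
  by exists a'; split => //; lia.
Qed.

Lemma set2_uniq N (i j i' j' : 'I_N) : i < j -> i' < j' -> [set i; j] = [set i'; j'] ->
  i = i' /\ j = j'.
Proof.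
move=> ij ij' h.
have hi : i \in [set i'; j'] by rewrite -h set21.
have hj : j \in [set i'; j'] by rewrite -h set22.
have hi' : i' \in [set i; j] by rewrite h set21.
rewrite !in_set2 in hi hj hi'.
case/orP: hi => /eqP ei; case/orP: hj => /eqP ej; subst => //.
- by rewrite ltnn in ij.
- by exfalso; lia.
- by rewrite ltnn in ij.
Qed.

Lemma sp_swap (T : finType) (e : rel T) i j u v s : [set i; j] = [set u; v] ->
  shortest_path e i j s -> shortest_path e u v s.
Proof.
move=> h [x [q [hs [hp [hx hm]]]]]; exists x, q; do !split => //.
by rewrite hx.
Qed.

Lemma edge_on_sym (T : finType) (s : seq T) a b : edge_on s a b = edge_on s b a.
Proof. by apply: eq_has => xy; rewrite orbC. Qed.

Section Constr.
Variables (n m k : nat).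
Hypotheses (hk : k <= m) (hkN : m - k <= NC n) (hn : 2 <= n) (ho : odd n -> 3 <= n).

Definition wv (i0 : 'I_(n+m)) c : 'I_(n+m) := insubd i0 (n + k + c).

Lemma wv_val i0 c : c < m - k -> val (wv i0 c) = n + k + c.
Proof. by move=> cm; rewrite /wv val_insubd; case: ifP => //; lia. Qed.

Definition pth (i j : 'I_(n+m)) : option (seq 'I_(n+m)) :=
  if j < n then (if col n i j < m - k then Some [:: i; wv i (col n i j); j] else None)
  else if i < n then Some [:: i; j] else None.

Definition PP (Q : {set 'I_(n+m)}) : option (seq 'I_(n+m)) :=
  if [pick ij : 'I_(n+m) * 'I_(n+m) | (ij.1 < ij.2) && (Q == [set ij.1; ij.2])] is Some ij
  then pth ij.1 ij.2 else None.

Lemma PP_eq (i j : 'I_(n+m)) : i < j -> PP [set i; j] = pth i j.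
Proof.
move=> ij; rewrite /PP; case: pickP => [[i' j'] /andP [/= hlt /eqP h] | h0].
  by have [-> ->] := set2_uniq ij hlt h.
by have := h0 (i, j); rewrite /= ij eqxx.
Qed.

Lemma pth_sp (i j : 'I_(n+m)) : i < j ->
  match pth i j with Some s => shortest_path (Knm n m) i j s | None => True end.
Proof.
move=> ij; rewrite /pth; case: ifP => jn.
  case: ifP => // cm.
  set w := wv i _.
  have wv' : val w = n + k + col n i j by rewrite wv_val.
  have iN : i < n by apply: ltn_trans ij jn.
  have wn : (w < n) = false by rewrite wv'; apply/negbTE; rewrite -leqNgt; lia.
  exists i, [:: w; j]; split => //; split; first by rewrite /= /Knm wn iN jn.
  split => //.
  move=> [|z [|? ?]] //=; first by move=> _ h; rewrite h ltnn in ij.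
  by rewrite /Knm andbT => hz hzj; move: hz; rewrite hzj iN jn.
case: ifP => // iN.
exists i, [:: j]; split => //; split; first by rewrite /= /Knm iN jn.
split => //.
by move=> [|z r] //= _ h; rewrite h ltnn in ij.
Qed.

Lemma seg_constr : strong_edge_geodetic (Knm n m) [set x : 'I_(n+m) | x < n + k].
Proof.
exists PP; split.
  move=> u v _ _ uv.
  have [i [j [ij hs]]] : exists i j : 'I_(n+m), i < j /\ [set u; v] = [set i; j].
    case: (ltngtP u v) => h.
    - by exists u, v.
    - by exists v, u; rewrite setUC.
    - by move: uv; rewrite (val_inj h) eqxx.
  rewrite hs PP_eq //; have := pth_sp ij; case: pth => // s.
  exact: sp_swap.
have main : forall a b : 'I_(n+m), a < n -> n <= b ->
    exists u v s, [/\ u \in [set x : 'I_(n+m) | x < n + k], v \in [set x : 'I_(n+m) | x < n + k],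
      u != v, PP [set u; v] = Some s & edge_on s a b].
  move=> a b an bn.
  have ab : a < b by apply: leq_trans an bn.
  case: (ltnP b (n + k)) => hb.
    exists a, b, [:: a; b]; split.
    - by rewrite inE; lia.
    - by rewrite inE.
    - by rewrite neq_ltn ab.
    - by rewrite PP_eq // /pth ltnNge bn /= an.
    - by rewrite /edge_on /= !eqxx.
  have bm : b < n + m by [].
  set c := b - n - k.
  have cm : c < m - k by lia.
  have cN : c < NC n by apply: leq_trans cm hkN.
  have [a' [a'n a'a hc]] := col_ex hn ho an cN.
  pose a2 : 'I_(n+m) := insubd a a'.
  have a2v : val a2 = a' by rewrite /a2 val_insubd; case: ifP => //; lia.
  have wb : forall i0, wv i0 c = b.
    move=> i0; apply: val_inj; rewrite /= wv_val // /c; lia.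
  exists a, a2.
  case: (ltngtP a a2) => h.
  - exists [:: a; b; a2]; split.
    + by rewrite inE; lia.
    + by rewrite inE a2v; lia.
    + by rewrite neq_ltn h.
    + by rewrite PP_eq // /pth a2v a'n hc cm wb.
    + by rewrite /edge_on /= !eqxx.
  - exists [:: a2; b; a]; split.
    + by rewrite inE; lia.
    + by rewrite inE a2v; lia.
    + by rewrite neq_ltn h orbT.
    + by rewrite setUC PP_eq // /pth an col_sym a2v hc cm wb.
    + by rewrite /edge_on /= !eqxx !orbT.
  - by move: a'a; rewrite -a2v h eqxx.
move=> a b; rewrite /Knm.
case an: (a < n); case bn: (b < n) => //= _.
  apply: main => //; lia.
have ha : n <= a by rewrite leqNgt an.
have [u [v [s [hu hv huv hP hon]]]] := main b a bn ha.
by exists u, v, s; split => //; rewrite edge_on_sym.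
Qed.

Lemma card_constr : #|[set x : 'I_(n+m) | x < n + k]| = n + k.
Proof. by apply: card_lt; lia. Qed.
End Constr.

Lemma upper n m k : k <= m -> m - k <= NC n -> 2 <= n -> (odd n -> 3 <= n) ->
  exists S, strong_edge_geodetic (Knm n m) S /\ #|S| = n + k.
Proof.
move=> *; exists [set x : 'I_(n+m) | x < n + k]; split.
  by apply: seg_constr.
by apply: card_constr.
Qed.

Lemma lb_facts n m S : 1 <= n -> 1 <= m -> strong_edge_geodetic (Knm n m) S ->
  (exists b c, [/\ #|S| = n + b, b + c = m & c * (n + odd n) <= n * n.-1]) \/
  (exists a c, [/\ #|S| = m + a, a + c = n & c * (m + odd m) <= m * m.-1]).
Proof.
move=> n1 m1 hS.
set X := [set i : 'I_(n+m) | i < n].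
have cX : #|X| = n by apply: card_lt; apply: leq_addr.
have cY : #|~: X| = m by have := cardsC X; rewrite card_ord cX; lia.
pose p := fun i : 'I_(n+m) => i < n.
have he : forall x y, Knm n m x y = (p x != p y) by [].
have he' : forall x y, Knm n m x y = (~~ p x != ~~ p y).
  by move=> x y; rewrite /Knm /p; case: (x < n); case: (y < n).
have hX : forall x, (x \in X) = p x by move=> x; rewrite inE.
have hY : forall x, (x \in ~: X) = ~~ p x by move=> x; rewrite inE hX.
have hX' : forall x, (x \in X) = ~~ ~~ p x by move=> x; rewrite negbK hX.
case: (boolP (X \subset S)) => XS.
  left; have := count_lb he hS hX hY XS; rewrite cX => hc.
  exists #|~: X :&: S|, #|~: X :\: S|; split => //.
    by rewrite -(cardsID X S) (setIidPr XS) cX setDE setIC.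
  by rewrite cardsID cY.
case: (boolP (~: X \subset S)) => YS.
  right; have := count_lb he' hS hY hX' YS; rewrite cY => hc.
  exists #|X :&: S|, #|X :\: S|; split => //.
    by rewrite -(cardsID (~: X) S) (setIidPr YS) cY setDE setCK setIC.
  by rewrite cardsID cX.
exfalso.
have [x xX xS] := subsetPn XS.
have [y yY yS] := subsetPn YS.
have exy : Knm n m x y by rewrite he -hX xX -(negbK (p y)) -hY yY.
by case: (edge_S he hS exy) => h; [move: xS | move: yS]; rewrite h.
Qed.

Lemma ar1 c n : 0 < n -> c * n <= n * n.-1 -> c <= n.-1.
Proof. by move=> n0; rewrite [n * _]mulnC leq_pmul2r. Qed.

Lemma ar2 c n : 1 < n -> c * (n + 1) <= n * n.-1 -> c <= n.-2.
Proof.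
move=> n1 h.
have : c * (n + 1) < n.-1 * (n + 1) by apply: (leq_ltn_trans h); rewrite mulnC ltn_pmul2l; lia.
rewrite ltn_pmul2r; lia.
Qed.

Lemma lb_num n m S : 2 <= n -> 2 <= m -> strong_edge_geodetic (Knm n m) S ->
  (exists b c, [/\ #|S| = n + b, b + c = m, c <= n.-1 & (odd n -> c <= n.-2)]) \/
  (exists a c, [/\ #|S| = m + a, a + c = n, c <= m.-1 & (odd m -> c <= m.-2)]).
Proof.
move=> n2 m2 hS.
have n1 : 1 <= n by lia. have m1 : 1 <= m by lia.
case: (lb_facts n1 m1 hS) => [[b [c [hs hbc hc]]] | [a [c [hs hac hc]]]].
  left; exists b, c; split => //.
    by apply: ar1 => //; apply: leq_trans hc; rewrite leq_mul2l leq_addr orbT.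
  by move=> o; apply: ar2 => //; rewrite o in hc.
right; exists a, c; split => //.
  by apply: ar1 => //; apply: leq_trans hc; rewrite leq_mul2l leq_addr orbT.
by move=> o; apply: ar2 => //; rewrite o in hc.
Qed.

Theorem mainTheorem1 (n m : nat) (hm : 2 <= m) (hmn : m <= n) :
  (~~ odd n ->
     (n = m -> is_sge (Knm n m) n.+1) /\
     (m.+1 <= n -> is_sge (Knm n m) n)) /\
  (odd n ->
     (n = m -> is_sge (Knm n m) n.+2) /\
     (n = m.+1 -> is_sge (Knm n m) n.+1) /\
     (m.+2 <= n -> is_sge (Knm n m) n)).
Proof.
have n2 : 2 <= n by lia.
split => [ev | od].
  have hNC : NC n = n.-1 by rewrite /NC (negbTE ev).
  have ho : odd n -> 3 <= n by rewrite (negbTE ev).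
  split => [nm | mn]; split.
  - have [S [hS cS]] := @upper n m 1 ltac:(lia) ltac:(rewrite hNC; lia) n2 ho.
    by exists S; rewrite cS addn1.
  - move=> S hS; case: (lb_num n2 hm hS) => [[b [c [-> ? ? _]]] | [a [c [-> ? ? _]]]]; lia.
  - have [S [hS cS]] := @upper n m 0 ltac:(lia) ltac:(rewrite hNC; lia) n2 ho.
    by exists S; rewrite cS addn0.
  - move=> S hS; case: (lb_num n2 hm hS) => [[b [c [-> ? ? _]]] | [a [c [-> ? ? _]]]]; lia.
have hNC : NC n = n.-2 by rewrite /NC od.
have n3 : 3 <= n by move: od; case: n n2 {hmn hNC} => [|[|[|]]].
have ho : odd n -> 3 <= n by [].
split; [|split] => hh; split.
- have [S [hS cS]] := @upper n m 2 ltac:(lia) ltac:(rewrite hNC; lia) n2 ho.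
  by exists S; rewrite cS addn2.
- move=> S hS; case: (lb_num n2 hm hS) => [[b [c [-> ? ? h]]] | [a [c [-> ? ? h]]]].
    have := h od; lia.
  have : odd m by rewrite -hh.
  move=> /h; lia.
- have [S [hS cS]] := @upper n m 1 ltac:(lia) ltac:(rewrite hNC; lia) n2 ho.
  by exists S; rewrite cS addn1.
- move=> S hS; case: (lb_num n2 hm hS) => [[b [c [-> ? ? h]]] | [a [c [-> ? ? h]]]].
    have := h od; lia.
  lia.
- have [S [hS cS]] := @upper n m 0 ltac:(lia) ltac:(rewrite hNC; lia) n2 ho.
  by exists S; rewrite cS addn0.
- move=> S hS; case: (lb_num n2 hm hS) => [[b [c [-> ? ? h]]] | [a [c [-> ? ? h]]]]; lia.
Qed.
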